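(* Let $A$ be a finite-dimensional complex Hilbert space. Every doubly mixed vector $\Psi\in A^{\otimes 4}$ is doubly dilated.
   Context: Fix an orthonormal basis $e_1,\dots,e_d$ of $A$ (identifying $\overline{A}$ with $A$ via this basis) and identify $\Psi\in A^{\otimes 4}$ with its coefficient array $\Psi(a_1,a_2,a_3,a_4)$ with respect to $e_{a_1}\otimes e_{a_2}\otimes e_{a_3}\otimes e_{a_4}$. Doubly mixed: $\Psi$ is doubly mixed if there are finitely many indices $k=1,\dots,m$, a probability distribution $(r_k)_k$, for each $k$ finitely many unit vectors $\phi_{k1},\dots,\phi_{kn_k}\in A$ and a probability distribution $(p_{ki})_{i}$, such that, writing $\rho_k(a,b)=\sum_{i=1}^{n_k}p_{ki}\,\phi_{ki}(a)\overline{\phi_{ki}(b)}$ (where $\phi(a)$ is the $a$-th coordinate of $\phi$), we have $\Psi(a_1,a_2,a_3,a_4)=\sum_{k=1}^m r_k\,\rho_k(a_1,a_2)\,\rho_k(a_3,a_4)$ for all indices. Doubly dilated: $\Psi$ is doubly dilated if there are finite nonempty index sets $I_B, I_C$ and an arbitrary complex array $\psi(a,i,k)$ ($a\in\{1,\dots,d\}$, $i\in I_B$, $k\in I_C$), i.e. a vector in $A\otimes B\otimes C$ for finite-dimensional spaces $B,C$ with bases indexed by $I_B,I_C$, such that $\Psi(a_1,a_2,a_3,a_4)=\sum_{k,l\in I_C}\sum_{i,j\in I_B}\psi(a_1,i,k)\,\overline{\psi(a_2,i,l)}\,\psi(a_3,j,l)\,\overline{\psi(a_4,j,k)}$ for all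 indices. *)

(* Defs.v *)
From HB Require Import structures.
From mathcomp Require Import all_boot all_order all_algebra.
From mathcomp Require Import complex.
From mathcomp Require Import reals.
Set Implicit Arguments. Unset Strict Implicit. Unset Printing Implicit Defensive.
Import Order.TTheory GRing.Theory Num.Theory.
Local Open Scope ring_scope.

Section Defs.
Variable R : realType.
Local Notation C := R[i].

(* phi is a unit vector of A = C^d (coordinates in the fixed orthonormal basis) *)
Definition unit_vec (d : nat) (phi : 'I_d -> C) : Prop :=
  \sum_(a < d) phi a * (phi a)^* = 1.

(* p is a probability distribution on a finite index set {0..n-1};
   in C, 0 <= z means z is real and nonnegative *)
Definition prob_dist (n : nat) (p : 'I_n -> C) : Prop :=
  (forall i, 0 <= p i) /\ \sum_(i < n) p i = 1.

Definition mixed_state (d n : nat) (p : 'I_n -> C) (phi : 'I_n -> 'I_d -> C)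
  (a b : 'I_d) : C :=
  \sum_(i < n) p i * phi i a * (phi i b)^*.

Definition doubly_mixed (d : nat) (Psi : 'I_d -> 'I_d -> 'I_d -> 'I_d -> C) : Prop :=
  exists (m : nat) (r : 'I_m -> C) (n : 'I_m -> nat)
         (p : forall k : 'I_m, 'I_(n k) -> C)
         (phi : forall k : 'I_m, 'I_(n k) -> 'I_d -> C),
    prob_dist r /\
    (forall k, prob_dist (p k)) /\
    (forall k i, unit_vec (phi k i)) /\
    forall a1 a2 a3 a4,
      Psi a1 a2 a3 a4 =
      \sum_(k < m) r k * mixed_state (p k) (phi k) a1 a2
                       * mixed_state (p k) (phi k) a3 a4.

Definition doubly_dilated (d : nat) (Psi : 'I_d -> 'I_d -> 'I_d -> 'I_d -> C) : Prop :=
  exists (nB nC : nat) (psi : 'I_d -> 'I_nB -> 'I_nC -> C),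
    (0 < nB)%N /\ (0 < nC)%N /\
    forall a1 a2 a3 a4,
      Psi a1 a2 a3 a4 =
      \sum_(k < nC) \sum_(l < nC) \sum_(i < nB) \sum_(j < nB)
        psi a1 i k * (psi a2 i l)^* * psi a3 j l * (psi a4 j k)^*.
End Defs.

(* Main.v *)
Require Import Defs.
From HB Require Import structures.
From mathcomp Require Import all_boot all_order all_algebra.
From mathcomp Require Import complex reals.
From mathcomp Require Import ring.
Set Implicit Arguments. Unset Strict Implicit. Unset Printing Implicit Defensive.
Import Order.TTheory GRing.Theory Num.Theory.
Local Open Scope ring_scope.

Lemma sqC_ge0 (R : realType) (z : R[i]) : 0 <= z ->
  ((Num.sqrt (complex.Re z))%:C)%C * ((Num.sqrt (complex.Re z))%:C)%C = z
  /\ 0 <= ((Num.sqrt (complex.Re z))%:C)%C.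
Proof.
move=> z0; split; last by rewrite ler0c sqrtr_ge0.
rewrite -rmorphM /= -expr2 sqr_sqrtr.
  rewrite [RHS]complexE ger0_Im // rmorph0 mulr0 addr0 //.
by move: z0; rewrite lecE /= => /andP[].
Qed.

Lemma sumS (R : realType) (T : finType) (F : T -> R[i]) :
  \sum_(i < #|{:T}|) F (enum_val i) = \sum_x F x.
Proof. by rewrite -big_enum_val. Qed.

Lemma sumSig (R : realType) (m : nat) (n : 'I_m -> nat)
  (H : {k : 'I_m & 'I_(n k)} -> R[i]) :
  \sum_x H x = \sum_(K < m) \sum_(i < n K) H (Tagged (fun K => 'I_(n K)) i).
Proof.
rewrite (sig_big_dep xpredT (fun _ => xpredT) (fun K (i : 'I_(n K)) => H (Tagged (fun K => 'I_(n K)) i))) /=.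
by apply: eq_bigr => -[K i].
Qed.

Theorem theorem2 (R : realType) (d : nat)
    (Psi : 'I_d -> 'I_d -> 'I_d -> 'I_d -> R[i]) :
  doubly_mixed Psi -> doubly_dilated Psi.
Proof.
move=> [m [r [n [p [phi [[r0 r1] [pd [_ Hpsi]]]]]]]].
pose S := {k : 'I_m & 'I_(n k)}.
pose sr (k : 'I_m) : R[i] := ((Num.sqrt (Num.sqrt (complex.Re (r k))))%:C)%C.
pose sp (k : 'I_m) (i : 'I_(n k)) : R[i] := ((Num.sqrt (complex.Re (p k i)))%:C)%C.
pose G (a : 'I_d) (x : S) (c : 'I_m) : R[i] :=
  (tag x == c)%:R * sr c * sp (tag x) (tagged x) * phi (tag x) (tagged x) a.
have m0 : (0 < m)%N.
  case: m r r0 r1 {Hpsi sr sp G S n p phi pd} => // r _.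
  by rewrite big_ord0 => /eqP; rewrite eq_sym oner_eq0.
have n0 : (0 < n (Ordinal m0))%N.
  case: (pd (Ordinal m0)) => _.
  case: (n (Ordinal m0)) (p (Ordinal m0)) => // q.
  by rewrite big_ord0 => /eqP; rewrite eq_sym oner_eq0.
exists #|{:S}|, m, (fun a b c => G a (enum_val b) c).
split.
  apply/card_gt0P; exists (Tagged (fun K => 'I_(n K)) (Ordinal n0)); done.
split; first done.
move=> a1 a2 a3 a4; rewrite Hpsi.
have e0 : forall b : bool, (b%:R : R[i]) = if b then 1 else 0 by case.
have srsr : forall k, sr k * sr k * (sr k * sr k) = r k.
  move=> k; have [<- _] := sqC_ge0 (r0 k).
  have h : forall x : R, Num.sqrt (Num.sqrt x) * Num.sqrt (Num.sqrt x) = Num.sqrt x.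
    by move=> x; rewrite -expr2 sqr_sqrtr // sqrtr_ge0.
  by rewrite /sr -!rmorphM /= h.
have cR : forall x : R, ((x%:C)%C)^* = (x%:C)%C.
  by move=> x; rewrite /Num.conj /= oppr0.
have core : forall k a b, \sum_(x : S) G a x k * (G b x k)^* =
    sr k * sr k * mixed_state (p k) (phi k) a b.
  move=> k a b; rewrite sumSig (bigD1 k) //= [X in _ + X = _]big1 ?addr0; last first.
    move=> K /negbTE nK; apply: big1 => i _; rewrite /G /= nK e0; ring.
  rewrite /mixed_state mulr_sumr; apply: eq_bigr => i _.
  rewrite /G /= eqxx e0 !rmorphM /= !cR.
  have [hp _] := sqC_ge0 ((pd k).1 i).
  rewrite -[in RHS]hp rmorph1 /sp /sr; ring.
have core' : forall k a b, \sum_(i < #|{:S}|) G a (enum_val i) k * (G b (enum_val i) k)^* =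
    sr k * sr k * mixed_state (p k) (phi k) a b.
  by move=> k a b; rewrite (sumS (fun x => G a x k * (G b x k)^*)) core.
apply: eq_bigr => k _.
rewrite (bigD1 k) //= [X in _ = _ + X]big1 ?addr0; last first.
  move=> l lk; apply: big1 => i _; apply: big1 => j _.
  rewrite /G; have [e|ne] := eqVneq (tag (enum_val i)) k.
    have -> : (tag (enum_val i) == l) = false by rewrite e eq_sym (negbTE lk).
    by rewrite !e0; ring.
  by rewrite e0; ring.
under eq_bigr => i _ do under eq_bigr => j _ do rewrite -mulrA.
under eq_bigr => i _ do rewrite -mulr_sumr.
rewrite -mulr_suml core' core'.
rewrite -(srsr k); ring.
Qed.
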